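(* Let $q$ be a power of $2$ and $r\in[q-1]$. The minimum Hamming distance $d$ of the QLRS code, viewed as the block code $\{(f(\boldsymbol v))_{\boldsymbol v\in\mathbb F_q^2}: f\in\mathcal C_q(\Phi,q-r)\}\subseteq\mathbb F_q^{q^2}$, satisfies $qr+1\le d\le qr+q$.
   Context: $\Phi=\{\alpha x^2+\beta x+\gamma:\alpha,\beta,\gamma\in\mathbb F_q\}$. For $f\in\mathbb F_q[x,y]$ and $\phi\in\Phi$, $f|_\phi$ is the reduction of $f(x,\phi(x))$ modulo $x^q-x$. $\mathcal C_q(\Phi,q-r)$ is the $\mathbb F_q$-space of $f\in\mathbb F_q[x,y]$ with $\deg_xf,\deg_yf\le q-1$ and $\deg f|_\phi<q-r$ for all $\phi\in\Phi$. The minimum Hamming distance is the minimum number of nonzero coordinates of a nonzero evaluation vector. *)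

(* Defs.v *)
From HB Require Import structures.
From mathcomp Require Import all_boot all_order all_algebra.
Set Implicit Arguments. Unset Strict Implicit. Unset Printing Implicit Defensive.
Import GRing.Theory.
Local Open Scope ring_scope.

(* Bivariate polynomials over F are represented as {poly {poly F}}:
   f = \sum_j f_j(x) y^j, with the outer variable y and inner variable x. *)

Definition bideg_lt (F : fieldType) (q : nat) (f : {poly {poly F}}) : bool :=
  (size f <= q)%N && [forall j : 'I_(size f), (size (nth 0%R (polyseq f) j) <= q)%N].

Definition quadPoly (F : fieldType) (a b c : F) : {poly F} :=
  a *: 'X^2 + b *: 'X + c%:P.

Definition restrict (F : fieldType) (q : nat) (f : {poly {poly F}})
  (phi : {poly F}) : {poly F} :=
  f.[phi] %% ('X^q - 'X).

Definition inQLRS (F : finFieldType) (q r : nat) (f : {poly {poly F}}) : bool :=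
  bideg_lt q f &&
  [forall a : F, forall b : F, forall c : F,
      (size (restrict q f (quadPoly a b c)) <= q - r)%N].

Definition eval2 (F : fieldType) (f : {poly {poly F}}) (v : F * F) : F :=
  (f.[v.2%:P]).[v.1].

Definition evalWeight (F : finFieldType) (f : {poly {poly F}}) : nat :=
  #|[set v : F * F | eval2 f v != 0]|.

Definition evalNonzero (F : finFieldType) (f : {poly {poly F}}) : bool :=
  [exists v : F * F, eval2 f v != 0].

(* Main.v *)
Require Import Defs.
From HB Require Import structures.
From mathcomp Require Import all_boot all_order all_algebra.
From mathcomp Require Import finfield ring zify.
Import GRing.Theory.
Local Open Scope ring_scope.

Lemma roots_card (F : finFieldType) (p : {poly F}) :
  p != 0 -> (#|[set x | p.[x] == 0%R]| < size p)%N.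
Proof.
move=> p0; rewrite cardE; apply: max_poly_roots => //; last exact: enum_uniq.
by apply/allP => x; rewrite mem_enum inE.
Qed.

Lemma horner_modq (F : finFieldType) (p : {poly F}) x :
  (p %% ('X^#|F| - 'X)).[x] = p.[x].
Proof.
rewrite [in RHS](divp_eq p ('X^#|F| - 'X)) hornerD hornerM.
by rewrite hornerD hornerN hornerXn hornerX expf_card subrr mulr0 add0r.
Qed.

Lemma horner2 (F : fieldType) (f : {poly {poly F}}) (phi : {poly F}) x :
  (f.[phi]).[x] = (f.[(phi.[x])%:P]).[x].
Proof.
elim/poly_ind: f => [|f c IH]; first by rewrite !horner0.
by rewrite !hornerMXaddC !hornerD !hornerM IH hornerC.
Qed.

Lemma lower (F : finFieldType) (q r : nat)
  (hq : #|F| = q) (hr1 : (1 <= r)%N) (hr2 : (r <= q - 1)%N) :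
  (forall f : {poly {poly F}}, inQLRS q r f -> evalNonzero f ->
      (q * r + 1 <= evalWeight f)%N).
Proof.
move=> f /andP[_ /forallP hall] /existsP[[v1 v2] /= hv].
pose phi b := quadPoly 0 b (v2 - b * v1).
have phiE b x : (phi b).[x] = b * x + (v2 - b * v1).
  by rewrite /phi /quadPoly scale0r add0r hornerD hornerZ hornerX hornerC.
pose g b := restrict q f (phi b).
have hs b : (size (g b) <= q - r)%N.
  by move: (hall 0) => /forallP/(_ b)/forallP/(_ (v2 - b * v1)).
have gE b x : (g b).[x] = eval2 f (x, (phi b).[x]).
  by rewrite /g /restrict -hq horner_modq horner2.
have g0 b : g b != 0.
  apply/eqP => e; move: hv.
  have : (g b).[v1] = eval2 f (v1, v2) by rewrite gE phiE; congr (eval2 f (v1, _)); ring.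
  by rewrite e horner0 => <-; rewrite eqxx.
pose N' b := [set x | ((g b).[x] != 0) && (x != v1)].
have hN b : (r <= #|N' b|)%N.
  pose Z := [set x | (g b).[x] == 0%R].
  have hz : (#|Z| < size (g b))%N := @roots_card _ _ (g0 b).
  have := cardsC Z.
  have : (#|~: Z| <= #|v1 |: N' b|)%N.
    apply: subset_leq_card; apply/subsetP => x; rewrite !inE.
    by move=> ->; rewrite andTb orbN.
  rewrite cardsU1 hq; move: (hs b); case: (v1 \notin N' b) => /= h1 h2 h3;
  move: hz h1 h2 h3; move: (#|Z|) (#|~: Z|) (#|N' b|) (size (g b)) => z1 z2 n s0 /=; lia.
pose P := [set p : F * F | ((g p.1).[p.2] != 0) && (p.2 != v1)].
have hP : (q * r <= #|P|)%N.
  have -> : #|P| = (\sum_(b : F) #|N' b|)%N.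
    rewrite -sum1_card.
    rewrite (eq_bigl (fun p : F * F => predT p.1 && (p.2 \in N' p.1))); last first.
      by move=> [b x]; rewrite !inE.
    rewrite -(pair_big_dep predT (fun b x => x \in N' b) (fun _ _ => 1%N)) /=.
    by apply: eq_bigr => b _; rewrite sum1_card.
  apply: (@leq_trans (\sum_(b : F) r)%N); last by apply: leq_sum.
  rewrite sum_nat_const mulnC -hq cardT -cardE; by rewrite mulnC.
pose h (p : F * F) := (p.2, (phi p.1).[p.2]).
have hinj : {in P &, injective h}.
  move=> [b x] [b' x'] _; rewrite !inE /= => /andP[_ hx] [ex]; subst x'; rewrite !phiE => e.
  have : (b - b') * (x - v1) = 0.
    have -> : (b - b') * (x - v1) = (b * x + (v2 - b * v1)) - (b' * x + (v2 - b' * v1)) by ring.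
    by rewrite e subrr.
  move/eqP; rewrite mulf_eq0 !subr_eq0 (negbTE hx) orbF => /eqP ->; done.
rewrite /evalWeight (@leq_trans #|(v1, v2) |: [set h p | p in P]|) //.
  rewrite cardsU1 card_in_imset //.
  have -> : (v1, v2) \notin [set h p | p in P].
    apply/imsetP => [[[b x]]]; rewrite inE /= => /andP[_ hx] [ex _].
    by move: hx; rewrite ex eqxx.
  by move: hP; move: (#|P|) => n /=; rewrite addn1 add1n ltnS.
apply: subset_leq_card; apply/subsetP => w; rewrite !inE.
case/orP => [/eqP -> // | /imsetP [[b x]]]; rewrite inE /= => /andP[hx _] ->.
by rewrite /h /= -gE.
Qed.
Lemma upper (F : finFieldType) (q r : nat)
  (hq : #|F| = q) (hr1 : (1 <= r)%N) (hr2 : (r <= q - 1)%N) :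
  (exists f : {poly {poly F}}, [/\ inQLRS q r f, evalNonzero f &
      (evalWeight f <= q * r + q)%N]).
Proof.
have q2 : (2 <= q)%N by lia.
pose s := take (q - r - 1) (enum F).
have ss : size s = (q - r - 1)%N by rewrite size_take -cardE hq; case: ifP; lia.
have us : uniq s by apply: take_uniq; apply: enum_uniq.
pose g := \prod_(a <- s) ('X - a%:P).
have sg : size g = (q - r)%N by rewrite size_prod_XsubC ss; lia.
have g0 : g != 0 by rewrite -size_poly_gt0 sg; lia.
have rg x : (g.[x] == 0) = (x \in s) by rewrite -root_prod_XsubC.
exists g%:P; split.
- apply/andP; split.
  + rewrite /bideg_lt size_polyC g0 /=; apply/andP; split; first lia.
    apply/forallP => j; rewrite coefC; case: eqP => _; rewrite ?sg ?size_poly0; lia.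
  + apply/forallP => a; apply/forallP => b; apply/forallP => c.
    rewrite /restrict hornerC modp_small ?sg //.
    rewrite size_polyDl ?size_polyXn ?size_polyN ?size_polyX; lia.
- apply/existsP.
  case: (pickP [pred x | x \notin s]) => [x hx | h].
    by exists (x, 0); rewrite /eval2 /= hornerC rg.
  have sub : {subset enum F <= s}.
    by move=> x _; have := h x; rewrite /= => /negbFE.
  have := uniq_leq_size (enum_uniq F) sub.
  rewrite -cardE hq ss; lia.
- have hc : #|~: [set x in s]| = (r + 1)%N.
    have := cardsC [set x in s]; rewrite cardsE (card_uniqP us) ss hq; lia.
  rewrite /evalWeight (@leq_trans #|setX (~: [set x in s]) [set: F]|) //.
    apply: subset_leq_card; apply/subsetP => [[x y]]; rewrite !inE /eval2 /= hornerC.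
    by rewrite rg andbT.
  rewrite cardsX hc cardsT hq; lia.
Qed.

Theorem mainTheorem6 (F : finFieldType) (q r : nat)
  (hq : #|F| = q) (hq2 : exists m : nat, q = (2 ^ m)%N)
  (hr1 : (1 <= r)%N) (hr2 : (r <= q - 1)%N) :
  (forall f : {poly {poly F}}, inQLRS q r f -> evalNonzero f ->
      (q * r + 1 <= evalWeight f)%N) /\
  (exists f : {poly {poly F}}, [/\ inQLRS q r f, evalNonzero f &
      (evalWeight f <= q * r + q)%N]).
Proof. split; [exact: lower | exact: upper]. Qed.
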